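(* Let $\Phi$ be a $\mathsf{BST}^{\otimes}$-conjunction and let $\Sigma$ be a partition satisfying $\Phi$ via a partition assignment $\mathfrak I:\mathrm{Vars}(\Phi)\to\mathcal P(\Sigma)$. Let $\mathcal G_\Sigma=(\mathcal P_\Sigma,\mathcal N_\Sigma,\mathcal T_\Sigma)$ be the $\otimes$-graph induced by $\Sigma$ via a bijection $q\mapsto q^{(\bullet)}$ from $\mathcal P_\Sigma$ onto $\Sigma$. Then the map $\mathfrak F_\Sigma(x)=\{q\in\mathcal P_\Sigma : q^{(\bullet)}\in\mathfrak I(x)\}$ ($x\in\mathrm{Vars}(\Phi)$) is a $\mathcal G_\Sigma$-fulfilling map for $\Phi$; in particular $\mathcal G_\Sigma$ fulfills $\Phi$.
   Context: Sets range over the von Neumann universe of well-founded sets. For sets $s,t$, $s\otimes t=\{\{u,v\} : u\in s,\ v\in t\}$. A $\mathsf{BST}^{\otimes}$-conjunction is a finite conjunction of literals of the forms $x=y\cup z$, $x=y\setminus z$, $x=y\otimes z$, $x\neq y$. A partition is a set of pairwise disjoint nonempty sets (blocks). A partition assignment is a map $\mathfrak I:V\to\mathcal P(\Sigma)$ on a finite set $V$ of variables; it induces the set assignment $M_{\mathfrak I}v=\bigcup\mathfrak I(v)$, and $\Sigma$ satisfies $\Phi$ via $\mathfrak I$ if $M_{\mathfrak I}$ satisfies $\Phi$. For a set $S$, $\mathrm{Pow}^*_{1,2}(S)=\{t\subseteq\bigcup S : 1\le|t|\le2,\ t\cap s\neq\emptyset\text{ for all }s\in S\}$, and for a family $\mathcal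 B$, $\mathrm{Pow}^*_{1,2}[\mathcal B]=\{\mathrm{Pow}^*_{1,2}(B):B\in\mathcal B\}$. A subset $\Sigma^*\subseteq\Sigma$ is a $\otimes$-subpartition if $\bigcup\Sigma^*=\bigcup\mathrm{Pow}^*_{1,2}[\mathcal B]$ for some $\mathcal B\subseteq\Sigma\otimes\Sigma$; $\Sigma_\otimes$ is the largest $\otimes$-subpartition (its elements are $\otimes$-blocks) and $\Pi_\otimes\subseteq\Sigma\otimes\Sigma$ is the (unique) set with $\bigcup\Sigma_\otimes=\bigcup\mathrm{Pow}^*_{1,2}[\Pi_\otimes]$. A $\otimes$-graph $\mathcal G=(\mathcal P,\mathcal N,\mathcal T)$ consists of a set $\mathcal P$ of places, nodes $\mathcal N=\mathcal P\otimes\mathcal P$ (nonempty subsets of $\mathcal P$ with at most two elements), $\mathcal P\cap\mathcal N=\emptyset$, and a target map $\mathcal T:\mathcal N\to\mathcal P(\mathcal P)$. The $\otimes$-graph induced by $\Sigma$ via a bijection $q\mapsto q^{(\bullet)}$ from a set of places $\mathcal P_\Sigma$ (with $\mathcal P_\Sigma\cap(\mathcal P_\Sigma\otimes\mathcal P_\Sigma)=\emptyset$) onto $\Sigma$ has nodes $\mathcal N_\Sigma=\mathcal P_\Sigma\otimes\mathcal P_\Sigma$ and, writing $B^{(\bullet)}=\{q^{(\bullet)}:q\in B\}$, target map $\mathcal T_\Sigma(B)=\{q\in\mathcal P_\Sigma : q^{(\bullet)}\in\Sigma_\otimes,\ q^{(\bullet)}\cap\mathrm{Pow}^*_{1,2}(B^{(\bullet)})\neq\emptyset\}$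 if $B^{(\bullet)}\in\Pi_\otimes$, and $\mathcal T_\Sigma(B)=\emptyset$ otherwise. A map $\mathfrak F:\mathrm{Vars}(\Phi)\to\mathcal P(\mathcal P)$ is $\mathcal G$-fulfilling for $\Phi$ if: (a) $\mathfrak F(x)=\mathfrak F(y)\star\mathfrak F(z)$ for each conjunct $x=y\star z$, $\star\in\{\cup,\setminus\}$; (b) $\mathfrak F(x)\neq\mathfrak F(y)$ for each conjunct $x\neq y$; (c) for each conjunct $x=y\otimes z$: (c1) $\emptyset\neq\mathcal T(\{\upsilon,\zeta\})\subseteq\mathfrak F(x)$ for all $\upsilon\in\mathfrak F(y),\zeta\in\mathfrak F(z)$; (c2) $\mathfrak F(x)\subseteq\bigcup\{\mathcal T(A):A\in\mathfrak F(y)\otimes\mathfrak F(z)\}$; (c3) $\bigcup\{\mathcal T(A):A\in\mathcal N\setminus(\mathfrak F(y)\otimes\mathfrak F(z))\}\cap\mathfrak F(x)=\emptyset$. $\mathcal G$ fulfills $\Phi$ if such a map exists. *)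

(* Defs.v *)
(* The von Neumann universe of well-founded sets is modelled by
   Aczel's type-theoretic model of set theory: well-founded trees [V] with
   extensional equality [eqV] and membership [inV]. *)
From Stdlib Require Import List.
Import ListNotations.

Inductive V : Type := sup (A : Type) (f : A -> V).

Definition idx (s : V) : Type := match s with sup A _ => A end.
Definition elts (s : V) : idx s -> V :=
  match s return idx s -> V with sup _ f => f end.

Fixpoint eqV (x y : V) {struct x} : Prop :=
  match x, y with
  | sup A f, sup B g =>
      (forall a, exists b, eqV (f a) (g b)) /\ (forall b, exists a, eqV (f a) (g b))
  end.

Definition inV (x s : V) : Prop := exists a : idx s, eqV x (elts s a).
Definition subV (s t : V) : Prop := forall w, inV w s -> inV w t.

Definition unionV (s t : V) : V :=
  sup (idx s + idx t) (fun i => match i with inl a => elts s a | inr b => elts t b end).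
Definition sepV (s : V) (P : V -> Prop) : V :=
  sup {a : idx s | P (elts s a)} (fun a => elts s (proj1_sig a)).
Definition diffV (s t : V) : V := sepV s (fun w => ~ inV w t).
Definition pairV (u v : V) : V := sup bool (fun b => if b then u else v).
Definition otimesV (s t : V) : V :=
  sup (idx s * idx t) (fun p => pairV (elts s (fst p)) (elts t (snd p))).
Definition bigcupV (S : V) : V :=
  sup {a : idx S & idx (elts S a)} (fun p => elts (elts S (projT1 p)) (projT2 p)).
Definition imgV (h : V -> V) (s : V) : V := sup (idx s) (fun a => h (elts s a)).

Inductive literal : Type :=
| LUnion  (x y z : nat)
| LDiff   (x y z : nat)
| LOtimes (x y z : nat)
| LNeq    (x y : nat).

Definition conjunction := list literal.

Definition vars_lit (l : literal) : list nat :=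
  match l with
  | LUnion x y z | LDiff x y z | LOtimes x y z => [x; y; z]
  | LNeq x y => [x; y]
  end.
Definition Vars (Phi : conjunction) : list nat := flat_map vars_lit Phi.

Definition sat_lit (M : nat -> V) (l : literal) : Prop :=
  match l with
  | LUnion x y z => eqV (M x) (unionV (M y) (M z))
  | LDiff x y z => eqV (M x) (diffV (M y) (M z))
  | LOtimes x y z => eqV (M x) (otimesV (M y) (M z))
  | LNeq x y => ~ eqV (M x) (M y)
  end.
Definition satisfies (M : nat -> V) (Phi : conjunction) : Prop :=
  forall l, In l Phi -> sat_lit M l.

Definition is_partition (Sigma : V) : Prop :=
  (forall s, inV s Sigma -> exists w, inV w s) /\
  (forall s t, inV s Sigma -> inV t Sigma -> ~ eqV s t ->
     forall w, inV w s -> ~ inV w t).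

Definition is_partition_assignment (Phi : conjunction) (Sigma : V) (J : nat -> V) : Prop :=
  forall x, In x (Vars Phi) -> subV (J x) Sigma.

Definition M_of (J : nat -> V) : nat -> V := fun v => bigcupV (J v).

Definition partition_satisfies_via (Sigma : V) (Phi : conjunction) (J : nat -> V) : Prop :=
  is_partition_assignment Phi Sigma J /\ satisfies (M_of J) Phi.

Definition in_PowStar (S t : V) : Prop :=
  subV t (bigcupV S) /\
  (exists u v, eqV t (pairV u v)) /\   (* 1 <= |t| <= 2 *)
  (forall s, inV s S -> exists a, inV a t /\ inV a s).

Definition in_bigcup_PowStar (B t : V) : Prop :=
  exists b, inV b B /\ in_PowStar b t.

Definition is_otimes_subpartition (Sigma SigS : V) : Prop :=
  subV SigS Sigma /\
  exists B, subV B (otimesV Sigma Sigma) /\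
    forall t, inV t (bigcupV SigS) <-> in_bigcup_PowStar B t.

Definition is_Sigma_otimes (Sigma SigO : V) : Prop :=
  is_otimes_subpartition Sigma SigO /\
  forall SigS, is_otimes_subpartition Sigma SigS -> subV SigS SigO.

Definition is_Pi_otimes (Sigma SigO PiO : V) : Prop :=
  subV PiO (otimesV Sigma Sigma) /\
  forall t, inV t (bigcupV SigO) <-> in_bigcup_PowStar PiO t.

(* (x)-graphs: places Pl, nodes Pl (x) Pl, target map T *)
Definition places_nodes_disjoint (Pl : V) : Prop :=
  forall q, inV q Pl -> ~ inV q (otimesV Pl Pl).

Definition is_place_bijection (Pl Sigma : V) (beta : V -> V) : Prop :=
  (forall q q', inV q Pl -> inV q' Pl -> (eqV q q' <-> eqV (beta q) (beta q'))) /\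
  (forall q, inV q Pl -> inV (beta q) Sigma) /\
  (forall s, inV s Sigma -> exists q, inV q Pl /\ eqV (beta q) s).

Definition T_Sigma (Pl SigO PiO : V) (beta : V -> V) (B : V) : V :=
  sepV Pl (fun q =>
    inV (imgV beta B) PiO /\
    inV (beta q) SigO /\
    exists w, inV w (beta q) /\ in_PowStar (imgV beta B) w).

Definition fulfilling (Pl : V) (T : V -> V) (Phi : conjunction) (F : nat -> V) : Prop :=
  (forall x, In x (Vars Phi) -> subV (F x) Pl) /\
  forall l, In l Phi ->
    match l with
    | LUnion x y z => eqV (F x) (unionV (F y) (F z))
    | LDiff x y z => eqV (F x) (diffV (F y) (F z))
    | LNeq x y => ~ eqV (F x) (F y)
    | LOtimes x y z =>
        (forall u v, inV u (F y) -> inV v (F z) ->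
           (exists q, inV q (T (pairV u v))) /\ subV (T (pairV u v)) (F x)) /\
        (forall q, inV q (F x) ->
           exists A, inV A (otimesV (F y) (F z)) /\ inV q (T A)) /\
        (forall A q, inV A (otimesV Pl Pl) -> ~ inV A (otimesV (F y) (F z)) ->
           inV q (T A) -> ~ inV q (F x))
    end.

Definition fulfills (Pl : V) (T : V -> V) (Phi : conjunction) : Prop :=
  exists F, fulfilling Pl T Phi F.

(* Main.v *)
Require Import Defs.
From Stdlib Require Import List Classical Setoid.

Lemma eqV_refl : forall x, eqV x x.
Proof. induction x as [A f IH]; simpl; split; intros a; exists a; apply IH. Qed.

Lemma eqV_sym : forall x y, eqV x y -> eqV y x.
Proof.
  induction x as [A f IH]; intros [B g] [H1 H2]; simpl; split.
  - intros b. destruct (H2 b) as [a Ha]. exists a. apply IH; exact Ha.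
  - intros a. destruct (H1 a) as [b Hb]. exists b. apply IH; exact Hb.
Qed.

Lemma eqV_trans : forall x y z, eqV x y -> eqV y z -> eqV x z.
Proof.
  induction x as [A f IH]; intros [B g] [C h] [H1 H2] [K1 K2]; simpl; split.
  - intros a. destruct (H1 a) as [b Hb]. destruct (K1 b) as [c Hc]. exists c. eapply IH; eauto.
  - intros c. destruct (K2 c) as [b Hb]. destruct (H2 b) as [a Ha]. exists a. eapply IH; eauto.
Qed.

Lemma inV_eq_l : forall w w' s, eqV w w' -> inV w s -> inV w' s.
Proof. intros w w' s E [a Ha]. exists a. eapply eqV_trans; [apply eqV_sym; exact E| exact Ha]. Qed.

Lemma inV_eq_r : forall w s s', eqV s s' -> inV w s -> inV w s'.
Proof. intros w [A f] [B g] [H1 H2] [a Ha]. simpl in *. destruct (H1 a) as [b Hb]. exists b. simpl. eapply eqV_trans; eauto. Qed.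

Lemma ext : forall s t, (forall w, inV w s <-> inV w t) -> eqV s t.
Proof.
  intros [A f] [B g] H. simpl. split.
  - intros a. destruct (proj1 (H (f a))) as [b Hb]. exists a; apply eqV_refl. exists b; exact Hb.
  - intros b. destruct (proj2 (H (g b))) as [a Ha]. exists b; apply eqV_refl. exists a. apply eqV_sym; exact Ha.
Qed.

Lemma eq_in : forall s t w, eqV s t -> (inV w s <-> inV w t).
Proof. intros; split; apply inV_eq_r; auto using eqV_sym. Qed.

Lemma in_union : forall w s t, inV w (unionV s t) <-> inV w s \/ inV w t.
Proof. intros w s t; split.
  - intros [[a|b] H]; [left; exists a | right; exists b]; exact H.
  - intros [[a H]|[b H]]; [exists (inl a) | exists (inr b)]; exact H.
Qed.

Lemma in_sep : forall w s P, inV w (sepV s P) <-> exists a, P (elts s a) /\ eqV w (elts s a).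
Proof. intros; split.
  - intros [[a Pa] H]. exists a; split; assumption.
  - intros [a [Pa H]]. exists (exist _ a Pa). exact H.
Qed.

Lemma in_sep_resp : forall w s (P : V -> Prop),
  (forall u v, inV u s -> inV v s -> eqV u v -> P u -> P v) ->
  (inV w (sepV s P) <-> inV w s /\ P w).
Proof. intros w s P HP. rewrite in_sep. split.
  - intros [a [Pa H]]. assert (inV w s) by (exists a; exact H). split; auto.
    apply (HP (elts s a) w); auto. exists a; apply eqV_refl. apply eqV_sym; auto.
  - intros [[a H] Pw]. exists a. split; auto. apply (HP w (elts s a)); auto. exists a; exact H. exists a; apply eqV_refl.
Qed.

Lemma in_pair : forall w u v, inV w (pairV u v) <-> eqV w u \/ eqV w v.
Proof. intros; split.
  - intros [[|] H]; [left|right]; exact H.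
  - intros [H|H]; [exists true | exists false]; exact H.
Qed.

Lemma pair_eq : forall u u' v v', eqV u u' -> eqV v v' -> eqV (pairV u v) (pairV u' v').
Proof. intros u u' v v' Hu Hv. apply ext. intro w. rewrite !in_pair. split; intros [H|H].
  - left; eapply eqV_trans; eauto.
  - right; eapply eqV_trans; eauto.
  - left; eapply eqV_trans; eauto using eqV_sym.
  - right; eapply eqV_trans; eauto using eqV_sym.
Qed.

Lemma pair_sym : forall u v, eqV (pairV u v) (pairV v u).
Proof. intros. apply ext. intro w. rewrite !in_pair. tauto. Qed.

Lemma in_otimes : forall w s t, inV w (otimesV s t) <-> exists u v, inV u s /\ inV v t /\ eqV w (pairV u v).
Proof. intros; split.
  - intros [[i j] H]. exists (elts s i), (elts t j).
    split; [exists i; apply eqV_refl|split; [exists j; apply eqV_refl| exact H]].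
  - intros [u [v [[i Hi] [[j Hj] H]]]]. exists (i,j). simpl. eapply eqV_trans; [exact H|]. apply pair_eq; auto.
Qed.

Lemma in_bigcup : forall w S, inV w (bigcupV S) <-> exists s, inV s S /\ inV w s.
Proof. intros; split.
  - intros [[a b] H]. exists (elts S a). split. exists a; apply eqV_refl. exists b; exact H.
  - intros [s [[a Ha] Hw]]. destruct (inV_eq_r _ _ _ Ha Hw) as [b Hb]. exists (existT _ a b). exact Hb.
Qed.

Lemma in_img : forall w h s, inV w (imgV h s) <-> exists a, eqV w (h (elts s a)).
Proof. intros; split; intros [a H]; exists a; exact H. Qed.

Lemma sameblock Sigma s t e : is_partition Sigma -> inV s Sigma -> inV t Sigma ->
  inV e s -> inV e t -> eqV s t.
Proof. intros [_ Hd] Hs Ht Hes Het. apply NNPP. intro N. exact (Hd s t Hs Ht N e Hes Het). Qed.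

Lemma blk Sigma (J : V) s e : is_partition Sigma -> subV J Sigma -> inV s Sigma -> inV e s ->
  (inV e (bigcupV J) <-> inV s J).
Proof. intros Hp HJ Hs He. rewrite in_bigcup. split.
  - intros [t [Ht Het]]. apply (inV_eq_l t). apply eqV_sym. eapply sameblock; eauto. exact Ht.
  - intros H. exists s; auto.
Qed.

Lemma pow_respect_w S w w' : in_PowStar S w -> eqV w w' -> in_PowStar S w'.
Proof. intros [Hs [[u [v Huv]] Hm]] E. split; [|split].
  - intros e He. apply Hs. eapply inV_eq_r; [apply eqV_sym; exact E| exact He].
  - exists u, v. eapply eqV_trans; [apply eqV_sym; exact E| exact Huv].
  - intros s Hs'. destruct (Hm s Hs') as [a [Ha1 Ha2]]. exists a; split; auto. eapply inV_eq_r; eauto.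
Qed.

Lemma pow_respect_S S S' w : in_PowStar S w -> eqV S S' -> in_PowStar S' w.
Proof. intros [Hs [Huv Hm]] E. split; [|split]; auto.
  - intros e He. specialize (Hs e He). rewrite in_bigcup in *. destruct Hs as [s [Hs1 Hs2]].
    exists s; split; auto. eapply inV_eq_r; eauto.
  - intros s Hs'. apply Hm. eapply inV_eq_r; [apply eqV_sym; exact E| exact Hs'].
Qed.

Lemma pair_in_pow s t a b w : inV a s -> inV b t -> eqV w (pairV a b) -> in_PowStar (pairV s t) w.
Proof. intros Ha Hb E. split; [|split].
  - intros e He. apply (inV_eq_r _ _ _ E) in He. rewrite in_pair in He. rewrite in_bigcup.
    destruct He as [He|He].
    + exists s. split. rewrite in_pair; left; apply eqV_refl. eapply inV_eq_l; [apply eqV_sym; exact He| exact Ha].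
    + exists t. split. rewrite in_pair; right; apply eqV_refl. eapply inV_eq_l; [apply eqV_sym; exact He| exact Hb].
  - exists a, b; exact E.
  - intros c Hc. rewrite in_pair in Hc. destruct Hc as [Hc|Hc].
    + exists a. split. eapply inV_eq_r; [apply eqV_sym; exact E|]. rewrite in_pair; left; apply eqV_refl.
      eapply inV_eq_r; [apply eqV_sym; exact Hc| exact Ha].
    + exists b. split. eapply inV_eq_r; [apply eqV_sym; exact E|]. rewrite in_pair; right; apply eqV_refl.
      eapply inV_eq_r; [apply eqV_sym; exact Hc| exact Hb].
Qed.

Lemma in_w_pair w u v e : eqV w (pairV u v) -> inV e w -> eqV e u \/ eqV e v.
Proof. intros E He. rewrite <- in_pair. eapply inV_eq_r; eauto. Qed.

Lemma pair_mem_l w u v : eqV w (pairV u v) -> inV u w.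
Proof. intros E. eapply inV_eq_r; [apply eqV_sym; exact E|]. rewrite in_pair; left; apply eqV_refl. Qed.
Lemma pair_mem_r w u v : eqV w (pairV u v) -> inV v w.
Proof. intros E. eapply inV_eq_r; [apply eqV_sym; exact E|]. rewrite in_pair; right; apply eqV_refl. Qed.

Lemma pow_sub s t w e : in_PowStar (pairV s t) w -> inV e w -> inV e s \/ inV e t.
Proof. intros [Hs _] He. specialize (Hs e He). rewrite in_bigcup in Hs.
  destruct Hs as [c [Hc Hec]]. rewrite in_pair in Hc. destruct Hc as [Hc|Hc];
  [left|right]; eapply inV_eq_r; eauto.
Qed.

Lemma pow_meet s t w : in_PowStar (pairV s t) w ->
  (exists e, inV e w /\ inV e s) /\ (exists e, inV e w /\ inV e t).
Proof. intros [_ [_ Hm]]. split; apply Hm; rewrite in_pair; [left|right]; apply eqV_refl. Qed.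

Lemma pow_lemma s t w : in_PowStar (pairV s t) w ->
  exists a b, inV a s /\ inV b t /\ eqV w (pairV a b).
Proof. intros HP. pose proof HP as [_ [[u [v E]] _]].
  destruct (pow_meet _ _ _ HP) as [[e1 [H1w H1s]] [e2 [H2w H2t]]].
  assert (Hu : inV u s \/ inV u t) by (eapply pow_sub; eauto using pair_mem_l).
  assert (Hv : inV v s \/ inV v t) by (eapply pow_sub; eauto using pair_mem_r).
  assert (Hus : inV u s \/ inV v s).
  { destruct (in_w_pair _ _ _ _ E H1w) as [X|X]; [left|right]; eapply inV_eq_l; eauto. }
  assert (Hut : inV u t \/ inV v t).
  { destruct (in_w_pair _ _ _ _ E H2w) as [X|X]; [left|right]; eapply inV_eq_l; eauto. }
  assert (Sw : eqV w (pairV v u)) by (eapply eqV_trans; [exact E| apply pair_sym]).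
  destruct Hus as [A|A]; destruct Hut as [B|B].
  - destruct Hv as [C|C]; [exists v, u | exists u, v]; auto.
  - exists u, v; auto.
  - exists v, u; auto.
  - destruct Hu as [C|C]; [exists u, v | exists v, u]; auto.
Qed.

Ltac eqs := repeat match goal with
  | |- eqV ?x ?x => apply eqV_refl
  | _ => eassumption
  | _ => (apply eqV_sym; eassumption)
  end.

Lemma pair_lemma Sigma s t b1 b2 a b w : is_partition Sigma ->
  inV s Sigma -> inV t Sigma -> inV b1 Sigma -> inV b2 Sigma ->
  inV a s -> inV b t -> eqV w (pairV a b) -> in_PowStar (pairV b1 b2) w ->
  (eqV b1 s /\ eqV b2 t) \/ (eqV b1 t /\ eqV b2 s).
Proof. intros Hp Hs Ht H1 H2 Ha Hb E HP.
  assert (Hw : forall e, inV e w -> inV e s \/ inV e t).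
  { intros e He. destruct (in_w_pair _ _ _ _ E He) as [X|X]; [left|right]; eapply inV_eq_l; eauto using eqV_sym. }
  assert (A1 : eqV s b1 \/ eqV s b2).
  { destruct (pow_sub _ _ _ _ HP (pair_mem_l _ _ _ E)); [left|right]; eapply sameblock; eauto. }
  assert (A2 : eqV t b1 \/ eqV t b2).
  { destruct (pow_sub _ _ _ _ HP (pair_mem_r _ _ _ E)); [left|right]; eapply sameblock; eauto. }
  destruct (pow_meet _ _ _ HP) as [[e1 [H1w H1s]] [e2 [H2w H2t]]].
  assert (B1 : eqV b1 s \/ eqV b1 t).
  { destruct (Hw e1 H1w); [left|right]; eapply sameblock; eauto. }
  assert (B2 : eqV b2 s \/ eqV b2 t).
  { destruct (Hw e2 H2w); [left|right]; eapply sameblock; eauto. }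
  destruct B1 as [X|X]; destruct B2 as [Y|Y]; auto.
  - left. split; auto. destruct A2 as [Z|Z].
    + apply (eqV_trans _ s); auto. apply (eqV_trans _ b1); apply eqV_sym; auto.
    + apply eqV_sym; auto.
  - right. split; auto. destruct A1 as [Z|Z].
    + apply (eqV_trans _ t); auto. apply (eqV_trans _ b1); apply eqV_sym; auto.
    + apply eqV_sym; auto.
Qed.

Lemma in_F Pl Sigma beta (J:V) q : is_place_bijection Pl Sigma beta ->
  (inV q (sepV Pl (fun q => inV (beta q) J)) <-> inV q Pl /\ inV (beta q) J).
Proof. intros [Hb _]. apply (in_sep_resp q Pl (fun q => inV (beta q) J)). intros u v Hu Hv E Pu.
  eapply inV_eq_l; [|exact Pu]. apply (proj1 (Hb u v Hu Hv)); exact E. Qed.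

Lemma img_pair Pl Sigma beta A u v : is_place_bijection Pl Sigma beta ->
  eqV A (pairV u v) -> inV u Pl -> inV v Pl -> eqV (imgV beta A) (pairV (beta u) (beta v)).
Proof. intros [Hb _] E Hu Hv. apply ext. intro w. rewrite in_img, in_pair. split.
  - intros [i Hi]. assert (Ei : inV (elts A i) (pairV u v)).
    { eapply inV_eq_r; [exact E|]. exists i; apply eqV_refl. }
    rewrite in_pair in Ei. destruct Ei as [X|X]; [left|right]; eapply eqV_trans; try exact Hi.
    + apply (Hb (elts A i) u); auto. eapply inV_eq_l; [apply eqV_sym; exact X| exact Hu].
    + apply (Hb (elts A i) v); auto. eapply inV_eq_l; [apply eqV_sym; exact X| exact Hv].
  - intros [X|X].
    + assert (Hi : inV u A) by (eapply inV_eq_r; [apply eqV_sym; exact E| rewrite in_pair; left; apply eqV_refl]).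
      destruct Hi as [i Hi]. exists i. eapply eqV_trans; [exact X|].
      apply (Hb _ _ Hu ltac:(eapply inV_eq_l; [exact Hi| exact Hu])); exact Hi.
    + assert (Hi : inV v A) by (eapply inV_eq_r; [apply eqV_sym; exact E| rewrite in_pair; right; apply eqV_refl]).
      destruct Hi as [i Hi]. exists i. eapply eqV_trans; [exact X|].
      apply (Hb _ _ Hv ltac:(eapply inV_eq_l; [exact Hi| exact Hv])); exact Hi.
Qed.

Lemma in_T Pl Sigma SigO PiO beta B q : is_place_bijection Pl Sigma beta ->
  (inV q (T_Sigma Pl SigO PiO beta B) <-> inV q Pl /\
    (inV (imgV beta B) PiO /\ inV (beta q) SigO /\
     exists w, inV w (beta q) /\ in_PowStar (imgV beta B) w)).
Proof. intros [Hb _]. unfold T_Sigma. apply (in_sep_resp q Pl (fun q => inV (imgV beta B) PiO /\ inV (beta q) SigO /\ exists w, inV w (beta q) /\ in_PowStar (imgV beta B) w)). intros u u' Hu Hu' E [P1 [P2 [w [P3 P4]]]].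
  assert (E' : eqV (beta u) (beta u')) by (apply (Hb u u' Hu Hu'); exact E).
  split; auto. split. eapply inV_eq_l; eauto. exists w; split; auto. eapply inV_eq_r; eauto.
Qed.

Definition FF Pl beta (Jx : V) := sepV Pl (fun q => inV (beta q) Jx).

Lemma blocks_eq Pl Sigma beta Jx Jy : is_place_bijection Pl Sigma beta ->
  (forall s, inV s Sigma -> (inV s Jx <-> inV s Jy)) ->
  eqV (FF Pl beta Jx) (FF Pl beta Jy).
Proof. intros Hb H. pose proof Hb as [_ [Hb2 _]]. apply ext. intro q. unfold FF. rewrite !(in_F _ _ _ _ _ Hb).
  split; intros [Hq X]; split; auto; apply (H _ (Hb2 q Hq)); auto. Qed.

Lemma lit_union Pl Sigma beta Jx Jy Jz : is_partition Sigma -> is_place_bijection Pl Sigma beta ->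
  subV Jx Sigma -> subV Jy Sigma -> subV Jz Sigma ->
  eqV (bigcupV Jx) (unionV (bigcupV Jy) (bigcupV Jz)) ->
  eqV (FF Pl beta Jx) (unionV (FF Pl beta Jy) (FF Pl beta Jz)).
Proof. intros Hp Hb HJx HJy HJz Hs. pose proof Hb as [_ [Hb2 _]]. apply ext. intro q. rewrite in_union. unfold FF.
  rewrite !(in_F _ _ _ _ _ Hb).
  split.
  - intros [Hq X]. destruct (proj1 Hp _ (Hb2 q Hq)) as [e He].
    assert (Ee : inV e (bigcupV Jx)) by (rewrite (blk Sigma Jx (beta q) e); auto).
    rewrite (eq_in _ _ _ Hs), in_union in Ee.
    destruct Ee as [Ee|Ee]; [left|right]; split; auto; eapply blk; eauto.
  - intros H. assert (Hq : inV q Pl) by (destruct H as [[H _]|[H _]]; auto).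
    split; auto. destruct (proj1 Hp _ (Hb2 q Hq)) as [e He].
    rewrite <- (blk Sigma Jx (beta q) e); auto. rewrite (eq_in _ _ _ Hs), in_union.
    destruct H as [[_ H]|[_ H]]; [left|right]; rewrite blk; eauto.
Qed.

Lemma in_diff w s t : inV w (diffV s t) <-> inV w s /\ ~ inV w t.
Proof. unfold diffV. apply (in_sep_resp w s (fun w => ~ inV w t)). intros u v _ _ E N X.
  apply N. eapply inV_eq_l; [apply eqV_sym; exact E| exact X]. Qed.

Lemma lit_diff Pl Sigma beta Jx Jy Jz : is_partition Sigma -> is_place_bijection Pl Sigma beta ->
  subV Jx Sigma -> subV Jy Sigma -> subV Jz Sigma ->
  eqV (bigcupV Jx) (diffV (bigcupV Jy) (bigcupV Jz)) ->
  eqV (FF Pl beta Jx) (diffV (FF Pl beta Jy) (FF Pl beta Jz)).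
Proof. intros Hp Hb HJx HJy HJz Hs. pose proof Hb as [_ [Hb2 _]]. apply ext. intro q. rewrite in_diff. unfold FF.
  rewrite !(in_F _ _ _ _ _ Hb).
  split.
  - intros [Hq X]. destruct (proj1 Hp _ (Hb2 q Hq)) as [e He].
    assert (Ee : inV e (bigcupV Jx)) by (rewrite (blk Sigma Jx (beta q) e); auto).
    rewrite (eq_in _ _ _ Hs), in_diff in Ee. destruct Ee as [E1 E2].
    split. split; auto; eapply blk; eauto. intros [_ N]. apply E2. rewrite blk; eauto.
  - intros [[Hq H1] H2]. split; auto. destruct (proj1 Hp _ (Hb2 q Hq)) as [e He].
    rewrite <- (blk Sigma Jx (beta q) e); auto. rewrite (eq_in _ _ _ Hs), in_diff.
    split. rewrite blk; eauto. intro N. apply H2. split; auto. rewrite <- (blk Sigma Jz (beta q) e); auto.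
Qed.

Lemma lit_neq Pl Sigma beta Jx Jy : is_place_bijection Pl Sigma beta ->
  subV Jx Sigma -> subV Jy Sigma ->
  ~ eqV (bigcupV Jx) (bigcupV Jy) -> ~ eqV (FF Pl beta Jx) (FF Pl beta Jy).
Proof. intros Hb HJx HJy N E. apply N. pose proof Hb as [_ [_ Hb3]].
  assert (K : forall A B, subV A Sigma -> eqV (FF Pl beta A) (FF Pl beta B) -> forall w, inV w (bigcupV A) -> inV w (bigcupV B)).
  { intros A B HA EAB w Hw. rewrite in_bigcup in *. destruct Hw as [s [Hs Hws]].
    destruct (Hb3 s (HA s Hs)) as [q [Hq Eq]].
    assert (Q : inV q (FF Pl beta A)) by (unfold FF; rewrite in_F; eauto; split; auto; eapply inV_eq_l; [apply eqV_sym; exact Eq| exact Hs]).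
    rewrite (eq_in _ _ _ EAB) in Q. unfold FF in Q. rewrite in_F in Q; eauto. destruct Q as [_ Q].
    exists s. split; auto. eapply inV_eq_l; [exact Eq| exact Q]. }
  apply ext. intro w. split; apply K; auto. apply eqV_sym; auto.
Qed.

Lemma inMx Jx Jy Jz w : eqV (bigcupV Jx) (otimesV (bigcupV Jy) (bigcupV Jz)) ->
  (inV w (bigcupV Jx) <-> exists a b s t, inV s Jy /\ inV t Jz /\ inV a s /\ inV b t /\ eqV w (pairV a b)).
Proof. intros Hs. rewrite (eq_in _ _ _ Hs), in_otimes. split.
  - intros [a [b [Ha [Hb E]]]]. rewrite in_bigcup in Ha, Hb. destruct Ha as [s [Hs1 Hs2]]. destruct Hb as [t [Ht1 Ht2]].
    exists a, b, s, t; auto.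
  - intros [a [b [s [t [Hs1 [Ht1 [Ha [Hb E]]]]]]]]. exists a, b. rewrite !in_bigcup. split; [|split]; eauto.
Qed.

Lemma JxSO Sigma SigO Jx Jy Jz : subV Jx Sigma -> subV Jy Sigma -> subV Jz Sigma ->
  eqV (bigcupV Jx) (otimesV (bigcupV Jy) (bigcupV Jz)) ->
  is_Sigma_otimes Sigma SigO -> subV Jx SigO.
Proof. intros HJx HJy HJz Hs [_ HSO]. apply HSO. split; auto. exists (otimesV Jy Jz). split.
  - intros w Hw. rewrite in_otimes in *. destruct Hw as [u [v [Hu [Hv E]]]]. exists u, v; auto.
  - intros t'. rewrite (inMx _ _ _ _ Hs). split.
    + intros [a [b [s [t [Hs1 [Ht1 [Ha [Hb E]]]]]]]]. exists (pairV s t). split.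
      * rewrite in_otimes. exists s, t. split; [|split]; auto. apply eqV_refl.
      * eapply pair_in_pow; eauto.
    + intros [b0 [Hb0 HP]]. rewrite in_otimes in Hb0. destruct Hb0 as [u [v [Hu [Hv E]]]].
      apply (pow_respect_S _ _ _ HP) in E. destruct (pow_lemma _ _ _ E) as [a [b [Ha [Hb E']]]].
      exists a, b, u, v; auto.
Qed.

Lemma PiIn Sigma SigO PiO Jx Jy Jz s t : is_partition Sigma ->
  subV Jx Sigma -> subV Jy Sigma -> subV Jz Sigma ->
  eqV (bigcupV Jx) (otimesV (bigcupV Jy) (bigcupV Jz)) ->
  is_Sigma_otimes Sigma SigO -> is_Pi_otimes Sigma SigO PiO ->
  inV s Jy -> inV t Jz -> inV (pairV s t) PiO.
Proof. intros Hp HJx HJy HJz Hs HSO [HPi1 HPi2] Hs1 Ht1.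
  destruct (proj1 Hp s (HJy s Hs1)) as [a Ha].
  destruct (proj1 Hp t (HJz t Ht1)) as [b Hb].
  assert (Hw : inV (pairV a b) (bigcupV Jx)).
  { rewrite (inMx _ _ _ _ Hs). exists a, b, s, t. split; [auto|split;[auto|split;[auto|split;[auto|apply eqV_refl]]]]. }
  assert (Hw' : inV (pairV a b) (bigcupV SigO)).
  { rewrite in_bigcup in Hw. rewrite in_bigcup. destruct Hw as [c [Hc Hwc]]. exists c; split; auto. apply (JxSO Sigma SigO Jx Jy Jz); auto. }
  rewrite HPi2 in Hw'. destruct Hw' as [B' [HB' HP]].
  pose proof (HPi1 _ HB') as HB''. rewrite in_otimes in HB''. destruct HB'' as [b1 [b2 [H1 [H2 E]]]].
  pose proof (pow_respect_S _ _ _ HP E) as HP'.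
  destruct (pair_lemma Sigma s t b1 b2 a b (pairV a b) Hp (HJy _ Hs1) (HJz _ Ht1) H1 H2 Ha Hb (eqV_refl _) HP') as [[X Y]|[X Y]].
  - eapply inV_eq_l; [|exact HB']. eapply eqV_trans; [exact E|]. apply pair_eq; auto.
  - eapply inV_eq_l; [|exact HB']. eapply eqV_trans; [exact E|]. eapply eqV_trans; [|apply pair_sym]. apply pair_eq; auto.
Qed.

Lemma lit_otimes Pl Sigma beta SigO PiO Jx Jy Jz : is_partition Sigma ->
  is_place_bijection Pl Sigma beta ->
  subV Jx Sigma -> subV Jy Sigma -> subV Jz Sigma ->
  eqV (bigcupV Jx) (otimesV (bigcupV Jy) (bigcupV Jz)) ->
  is_Sigma_otimes Sigma SigO -> is_Pi_otimes Sigma SigO PiO ->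
  let T := T_Sigma Pl SigO PiO beta in
  (forall u v, inV u (FF Pl beta Jy) -> inV v (FF Pl beta Jz) ->
     (exists q, inV q (T (pairV u v))) /\ subV (T (pairV u v)) (FF Pl beta Jx)) /\
  (forall q, inV q (FF Pl beta Jx) ->
     exists A, inV A (otimesV (FF Pl beta Jy) (FF Pl beta Jz)) /\ inV q (T A)) /\
  (forall A q, inV A (otimesV Pl Pl) -> ~ inV A (otimesV (FF Pl beta Jy) (FF Pl beta Jz)) ->
     inV q (T A) -> ~ inV q (FF Pl beta Jx)).
Proof. intros Hp Hb HJx HJy HJz Hs HSO HPi T.
  pose proof Hb as [Hb1 [Hb2 Hb3]].
  assert (HxSO := JxSO _ _ _ _ _ HJx HJy HJz Hs HSO).
  assert (Mblk : forall w, inV w (bigcupV Jx) -> forall q, inV q Pl -> inV w (beta q) -> inV q (FF Pl beta Jx)).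
  { intros w Hw q Hq Hwq. unfold FF. rewrite in_F by exact Hb. split; auto.
    rewrite <- (blk Sigma Jx (beta q) w); auto. }
  split; [|split].
  - intros u v Hu Hv. unfold FF in Hu, Hv. rewrite in_F in Hu, Hv by exact Hb.
    destruct Hu as [Hu Bu]. destruct Hv as [Hv Bv].
    assert (EI : eqV (imgV beta (pairV u v)) (pairV (beta u) (beta v))) by (eapply img_pair; eauto; apply eqV_refl).
    split.
    + destruct (proj1 Hp _ (HJy _ Bu)) as [a Ha]. destruct (proj1 Hp _ (HJz _ Bv)) as [b Hb0].
      assert (Hw : inV (pairV a b) (bigcupV Jx)).
      { rewrite (inMx _ _ _ _ Hs). exists a, b, (beta u), (beta v).
        split; [auto|split;[auto|split;[auto|split;[auto|apply eqV_refl]]]]. }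
      pose proof Hw as Hw0. rewrite in_bigcup in Hw0. destruct Hw0 as [c [Hc Hwc]].
      destruct (Hb3 c (HJx c Hc)) as [q [Hq Eq]].
      exists q. unfold T. rewrite in_T by exact Hb. split; auto. split; [|split].
      * eapply inV_eq_l; [apply eqV_sym; exact EI|]. apply (PiIn Sigma SigO PiO Jx Jy Jz); auto.
      * apply HxSO. eapply inV_eq_l; [apply eqV_sym; exact Eq| exact Hc].
      * exists (pairV a b). split. eapply inV_eq_r; [apply eqV_sym; exact Eq| exact Hwc].
        eapply pow_respect_S; [|apply eqV_sym; exact EI]. eapply pair_in_pow; eauto. apply eqV_refl.
    + intros q Hq. unfold T in Hq. rewrite in_T in Hq by exact Hb.
      destruct Hq as [Hq [_ [_ [w [Hw HP]]]]].
      apply (pow_respect_S _ _ _ HP) in EI. destruct (pow_lemma _ _ _ EI) as [a [b [Ha [Hb0 E]]]].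
      apply (Mblk w); auto. rewrite (inMx _ _ _ _ Hs). exists a, b, (beta u), (beta v). auto.
  - intros q Hq. pose proof Hq as Hq0. unfold FF in Hq0. rewrite in_F in Hq0 by exact Hb. destruct Hq0 as [HqP Bq].
    destruct (proj1 Hp _ (HJx _ Bq)) as [w Hw].
    assert (HwM : inV w (bigcupV Jx)) by (rewrite in_bigcup; eauto).
    pose proof HwM as HwM'. rewrite (inMx _ _ _ _ Hs) in HwM'.
    destruct HwM' as [a [b [s [t [Hs1 [Ht1 [Ha [Hb0 E]]]]]]]].
    destruct (Hb3 s (HJy s Hs1)) as [u [Hu Eu]]. destruct (Hb3 t (HJz t Ht1)) as [v [Hv Ev]].
    exists (pairV u v). split.
    + rewrite in_otimes. exists u, v. split; [|split; [|apply eqV_refl]]; unfold FF; rewrite in_F by exact Hb; split; auto.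
      eapply inV_eq_l; [apply eqV_sym; exact Eu| exact Hs1]. eapply inV_eq_l; [apply eqV_sym; exact Ev| exact Ht1].
    + assert (EI : eqV (imgV beta (pairV u v)) (pairV s t)).
      { eapply eqV_trans. apply (img_pair Pl Sigma beta (pairV u v) u v); auto; apply eqV_refl. apply pair_eq; auto. }
      unfold T. rewrite in_T by exact Hb. split; auto. split; [|split].
      * eapply inV_eq_l; [apply eqV_sym; exact EI|]. apply (PiIn Sigma SigO PiO Jx Jy Jz); auto.
      * apply HxSO; auto.
      * exists w. split; auto. eapply pow_respect_S; [|apply eqV_sym; exact EI]. eapply pair_in_pow; eauto.
  - intros A q HA HnA HqT Hq. rewrite in_otimes in HA. destruct HA as [u [v [Hu [Hv EA]]]].
    unfold FF in Hq. rewrite in_F in Hq by exact Hb. destruct Hq as [HqP Bq].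
    unfold T in HqT. rewrite in_T in HqT by exact Hb. destruct HqT as [_ [_ [_ [w [Hw HP]]]]].
    assert (EI := img_pair _ _ _ _ _ _ Hb EA Hu Hv).
    apply (pow_respect_S _ _ _ HP) in EI.
    assert (HwM : inV w (bigcupV Jx)) by (rewrite in_bigcup; eauto).
    rewrite (inMx _ _ _ _ Hs) in HwM.
    destruct HwM as [a [b [s [t [Hs1 [Ht1 [Ha [Hb0 E]]]]]]]].
    destruct (pair_lemma Sigma s t (beta u) (beta v) a b w Hp (HJy _ Hs1) (HJz _ Ht1) (Hb2 _ Hu) (Hb2 _ Hv) Ha Hb0 E EI)
      as [[X Y]|[X Y]]; apply HnA; rewrite in_otimes.
    + exists u, v. split; [|split; [|exact EA]]; unfold FF; rewrite in_F by exact Hb; split; auto.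
      eapply inV_eq_l; [apply eqV_sym; exact X| exact Hs1]. eapply inV_eq_l; [apply eqV_sym; exact Y| exact Ht1].
    + exists v, u. split; [|split; [|eapply eqV_trans; [exact EA| apply pair_sym]]]; unfold FF; rewrite in_F by exact Hb; split; auto.
      eapply inV_eq_l; [apply eqV_sym; exact Y| exact Hs1]. eapply inV_eq_l; [apply eqV_sym; exact X| exact Ht1].
Qed.

Theorem mainTheorem8 (Phi : conjunction) (Sigma : V) (J : nat -> V)
    (Pl : V) (beta : V -> V) (SigO PiO : V) :
  is_partition Sigma ->
  partition_satisfies_via Sigma Phi J ->
  places_nodes_disjoint Pl ->
  is_place_bijection Pl Sigma beta ->
  is_Sigma_otimes Sigma SigO ->
  is_Pi_otimes Sigma SigO PiO ->
  fulfilling Pl (T_Sigma Pl SigO PiO beta) Phi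
    (fun x => sepV Pl (fun q => inV (beta q) (J x))) /\
  fulfills Pl (T_Sigma Pl SigO PiO beta) Phi.
Proof.
  intros Hp [HJ Hsat] _ Hb HSO HPi.
  assert (Ful : fulfilling Pl (T_Sigma Pl SigO PiO beta) Phi
    (fun x => sepV Pl (fun q => inV (beta q) (J x)))).
  { split.
    - intros x _ q Hq. rewrite in_F in Hq by exact Hb. tauto.
    - intros l Hl.
      assert (HV : forall v, In v (vars_lit l) -> subV (J v) Sigma).
      { intros v Hv. apply HJ. unfold Vars. apply in_flat_map. exists l; auto. }
      specialize (Hsat l Hl). destruct l; simpl in HV, Hsat |- *; unfold M_of in Hsat.
      + exact (lit_union Pl Sigma beta (J x) (J y) (J z) Hp Hb (HV x ltac:(tauto)) (HV y ltac:(tauto)) (HV z ltac:(tauto)) Hsat).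
      + exact (lit_diff Pl Sigma beta (J x) (J y) (J z) Hp Hb (HV x ltac:(tauto)) (HV y ltac:(tauto)) (HV z ltac:(tauto)) Hsat).
      + exact (lit_otimes Pl Sigma beta SigO PiO (J x) (J y) (J z) Hp Hb (HV x ltac:(tauto)) (HV y ltac:(tauto)) (HV z ltac:(tauto)) Hsat HSO HPi).
      + exact (lit_neq Pl Sigma beta (J x) (J y) Hb (HV x ltac:(tauto)) (HV y ltac:(tauto)) Hsat). }
  split; [exact Ful | exists (fun x => sepV Pl (fun q => inV (beta q) (J x))); exact Ful].
Qed.
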